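(* Let $k$ be an algebraically closed field with $\operatorname{char}(k)\neq 2$, let $\alpha\in k$ with $\alpha(1-\alpha^2)\neq 0$, and let $A(\alpha)$ be the $k$-algebra on degree-one generators $x_1,\dots,x_4$ with defining relations \[ x_3x_1+x_1x_3=0,\quad x_3x_2-x_2x_3=0,\quad 2x_2^2+\alpha x_3^2=x_1^2,\quad x_4x_1+x_1x_4=0,\quad x_2^2-x_4^2=0,\quad x_4x_2+x_2x_4=x_3^2 . \] Let $\Gamma\subset\mathbb P^3\times\mathbb P^3$ be the point scheme of $A(\alpha)$, i.e. the zero locus of these six relations, where $\sum c_{ij}x_ix_j$ is evaluated at $(p,q)$ as $\sum c_{ij}p_iq_j$. Let $\mathfrak p$ be the projection of $\Gamma$ to the first factor and $\sigma$ the automorphism of $\mathfrak p$ whose graph is $\Gamma$. Then the points of $\Gamma$ are closed, of the form $(q,\sigma(q))$, and are exactly: (o) $(e_1,e_2),(e_2,e_1),(e_3,e_4),(e_4,e_3)$, where $e_1,\dots,e_4$ are the coordinate points; (i) $((\lambda_1,1,\lambda_3,1),(-\lambda_1,1,\lambda_3,1))$ with $\lambda_1^2=-2(1+\alpha)$, $\lambda_3^2=2$; (ii) $((\lambda_1,-1,\lambda_3,1),(-\lambda_1,-1,\lambda_3,1))$ with $\lambda_1^2=-2(1-\alpha)$, $\lambda_3^2=-2$; (iii) $((\lambda_1,\lambda_2,0,1),(-\lambda_1,-\lambda_2,0,1))$ with $\lambda_1^2=-2$, $\lambda_2^2=-1$; (iv) $((0,\lambda_2,\lambda_3,1),(0,\lambda_2,\lambda_3,\lambda_2^2))$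 with $\alpha\lambda_2^2+2\lambda_2+\alpha=0$, $\alpha\lambda_3^2=-2\lambda_2^2$. Furthermore, $\sigma(Z_i)=Z_i$ for every $i=0,\dots,4$, and $\sigma$ has ten orbits of order two, where $Z_0=\{e_1,\dots,e_4\}$ and $Z_1,\dots,Z_4$ are the sets of first coordinates of the points listed in (i)–(iv) respectively.
   Context: It is known (and used by the paper) that for this algebra $\Gamma$ is the graph of an automorphism $\sigma$ of $\mathfrak p$. *)

(* Defs.v *)
From HB Require Import structures.
From mathcomp Require Import all_boot all_order all_algebra.
Set Implicit Arguments. Unset Strict Implicit. Unset Printing Implicit Defensive.
Import Order.TTheory GRing.Theory Num.Theory.
Local Open Scope ring_scope.

Section Defs.
Variable k : fieldType.

(* A vector of k^4; coordinates x_1..x_4 are indices 0..3. *)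
Definition co (p : 'rV[k]_4) (i : nat) : k := p ord0 (inord i).

Definition pt4 (a b c d : k) : 'rV[k]_4 := \row_(i < 4) nth 0 [:: a; b; c; d] i.

(* equality as points of P^3 (for nonzero vectors) *)
Definition peq (p q : 'rV[k]_4) : Prop := exists c : k, c != 0 /\ q = c *: p.

Definition inGamma (al : k) (p q : 'rV[k]_4) : Prop :=
  [/\ p != 0, q != 0,
      co p 2 * co q 0 + co p 0 * co q 2 = 0,
      co p 2 * co q 1 - co p 1 * co q 2 = 0 &
      [/\ 2 * (co p 1 * co q 1) + al * (co p 2 * co q 2) = co p 0 * co q 0,
      co p 3 * co q 0 + co p 0 * co q 3 = 0,
      co p 1 * co q 1 - co p 3 * co q 3 = 0 &
      co p 3 * co q 1 + co p 1 * co q 3 = co p 2 * co q 2]].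

Definition e1 : 'rV[k]_4 := pt4 1 0 0 0.
Definition e2 : 'rV[k]_4 := pt4 0 1 0 0.
Definition e3 : 'rV[k]_4 := pt4 0 0 1 0.
Definition e4 : 'rV[k]_4 := pt4 0 0 0 1.

Definition Gamma_listed (al : k) (p q : 'rV[k]_4) : Prop :=
  [\/ [\/ peq p e1 /\ peq q e2, peq p e2 /\ peq q e1,
          peq p e3 /\ peq q e4 | peq p e4 /\ peq q e3],
      exists l1 l3 : k, [/\ l1 ^+ 2 = - 2 * (1 + al), l3 ^+ 2 = 2,
          peq p (pt4 l1 1 l3 1) & peq q (pt4 (- l1) 1 l3 1)],
      exists l1 l3 : k, [/\ l1 ^+ 2 = - 2 * (1 - al), l3 ^+ 2 = - 2,
          peq p (pt4 l1 (-1) l3 1) & peq q (pt4 (- l1) (-1) l3 1)] |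
      (exists l1 l2 : k, [/\ l1 ^+ 2 = - 2, l2 ^+ 2 = - 1,
          peq p (pt4 l1 l2 0 1) & peq q (pt4 (- l1) (- l2) 0 1)] \/
      exists l2 l3 : k, [/\ al * l2 ^+ 2 + 2 * l2 + al = 0,
          al * l3 ^+ 2 = - 2 * l2 ^+ 2,
          peq p (pt4 0 l2 l3 1) & peq q (pt4 0 l2 l3 (l2 ^+ 2))])].

Definition inZ (al : k) (i : 'I_5) (p : 'rV[k]_4) : Prop :=
  match val i with
  | 0%N => [\/ peq p e1, peq p e2, peq p e3 | peq p e4]
  | 1%N => exists l1 l3 : k, [/\ l1 ^+ 2 = - 2 * (1 + al), l3 ^+ 2 = 2 &
          peq p (pt4 l1 1 l3 1)]
  | 2%N => exists l1 l3 : k, [/\ l1 ^+ 2 = - 2 * (1 - al), l3 ^+ 2 = - 2 &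
          peq p (pt4 l1 (-1) l3 1)]
  | 3%N => exists l1 l2 : k, [/\ l1 ^+ 2 = - 2, l2 ^+ 2 = - 1 &
          peq p (pt4 l1 l2 0 1)]
  | _ => exists l2 l3 : k, [/\ al * l2 ^+ 2 + 2 * l2 + al = 0,
          al * l3 ^+ 2 = - 2 * l2 ^+ 2 & peq p (pt4 0 l2 l3 1)]
  end.

End Defs.

(* Main.v *)
Require Import Defs.
From HB Require Import structures.
From mathcomp Require Import all_boot all_order all_algebra.
From mathcomp Require Import ring.
Import Order.TTheory GRing.Theory Num.Theory.
Local Open Scope ring_scope.

Set Implicit Arguments. Unset Strict Implicit.

Section Base.
Variable k : fieldType.
Implicit Types (p q : 'rV[k]_4) (a b c d x : k).

Lemma co_pt4_0 a b c d : co (pt4 a b c d) 0 = a.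
Proof. by rewrite /co /pt4 mxE inordK. Qed.
Lemma co_pt4_1 a b c d : co (pt4 a b c d) 1 = b.
Proof. by rewrite /co /pt4 mxE inordK. Qed.
Lemma co_pt4_2 a b c d : co (pt4 a b c d) 2 = c.
Proof. by rewrite /co /pt4 mxE inordK. Qed.
Lemma co_pt4_3 a b c d : co (pt4 a b c d) 3 = d.
Proof. by rewrite /co /pt4 mxE inordK. Qed.

Lemma pt4_surj p : exists a b c d, p = pt4 a b c d.
Proof.
exists (co p 0), (co p 1), (co p 2), (co p 3).
apply/rowP => i; rewrite /co /pt4 !mxE (ord1 ord0).
case: i => [[|[|[|[|i]]]] Hi] //=; congr (p _ _); apply: val_inj; by rewrite /= inordK.
Qed.

Lemma scale_pt4 x a b c d : x *: pt4 a b c d = pt4 (x * a) (x * b) (x * c) (x * d).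
Proof.
apply/rowP => i; rewrite /pt4 !mxE.
by case: i => [[|[|[|[|i]]]] Hi] //=; rewrite mulr0.
Qed.

Lemma pt4_inj a b c d a' b' c' d' : pt4 a b c d = pt4 a' b' c' d' ->
  [/\ a = a', b = b', c = c' & d = d'].
Proof.
move=> E; split.
- by rewrite -(co_pt4_0 a b c d) E co_pt4_0.
- by rewrite -(co_pt4_1 a b c d) E co_pt4_1.
- by rewrite -(co_pt4_2 a b c d) E co_pt4_2.
- by rewrite -(co_pt4_3 a b c d) E co_pt4_3.
Qed.

Lemma pt4_eq0 a b c d : (pt4 a b c d == 0) = [&& a == 0, b == 0, c == 0 & d == 0].
Proof.
apply/eqP/and4P.
- move=> E; have : pt4 a b c d = pt4 0 0 0 0.
    by rewrite E; apply/rowP => i; rewrite !mxE; case: i => [[|[|[|[|i]]]] Hi].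
  by case/pt4_inj => -> -> -> ->.
- case=> /eqP-> /eqP-> /eqP-> /eqP->.
  by apply/rowP => i; rewrite !mxE; case: i => [[|[|[|[|i]]]] Hi].
Qed.

Lemma peq_pt4 a b c d a' b' c' d' :
  peq (pt4 a b c d) (pt4 a' b' c' d') <->
  exists x, [/\ x != 0, a' = x * a, b' = x * b, c' = x * c & d' = x * d].
Proof.
split.
- case=> x [x0]; rewrite scale_pt4 => /pt4_inj [*]; by exists x.
- case=> x [x0 -> -> -> ->]; exists x; by rewrite scale_pt4.
Qed.

Lemma inGammaE al a1 a2 a3 a4 b1 b2 b3 b4 :
  inGamma al (pt4 a1 a2 a3 a4) (pt4 b1 b2 b3 b4) <->
  [/\ ~~ [&& a1 == 0, a2 == 0, a3 == 0 & a4 == 0],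
      ~~ [&& b1 == 0, b2 == 0, b3 == 0 & b4 == 0],
      a3 * b1 + a1 * b3 = 0,
      a3 * b2 - a2 * b3 = 0 &
      [/\ 2 * (a2 * b2) + al * (a3 * b3) = a1 * b1,
      a4 * b1 + a1 * b4 = 0,
      a2 * b2 - a4 * b4 = 0 &
      a4 * b2 + a2 * b4 = a3 * b3]].
Proof.
by rewrite /inGamma !co_pt4_0 !co_pt4_1 !co_pt4_2 !co_pt4_3 !pt4_eq0.
Qed.

Lemma from1 m (U V W Z : k) : U = V -> W - Z = m * (U - V) -> W = Z.
Proof. by move=> -> /eqP; rewrite subrr mulr0 subr_eq0 => /eqP. Qed.

Lemma from2 m1 m2 (U1 V1 U2 V2 W Z : k) : U1 = V1 -> U2 = V2 ->
  W - Z = m1 * (U1 - V1) + m2 * (U2 - V2) -> W = Z.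
Proof. by move=> -> -> /eqP; rewrite !subrr !mulr0 addr0 subr_eq0 => /eqP. Qed.

Lemma mulK0 a b : a != 0 -> a * b = 0 -> b = 0.
Proof. by move=> a0 /eqP; rewrite mulf_eq0 (negbTE a0) => /eqP. Qed.
Lemma mulK0r a b : b != 0 -> a * b = 0 -> a = 0.
Proof. by move=> b0 /eqP; rewrite mulf_eq0 (negbTE b0) orbF => /eqP. Qed.

End Base.
Arguments from1 [k] m [U V W Z].
Arguments from2 [k] m1 m2 [U1 V1 U2 V2 W Z].


Ltac nz := rewrite ?(mulf_eq0, invr_eq0, oppr_eq0, expf_eq0) ?negb_or /=;
  repeat (apply/andP; split); done.
Ltac F := field; nz.
Ltac s0 H := rewrite ?(mul0r, mulr0, add0r, addr0, sub0r, subr0, oppr0) in H.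
Tactic Notation "simpl0" := idtac.

Section Cls.
Variable k : fieldType.

Definition sigc (a1 a2 a3 a4 : k) : 'rV[k]_4 :=
  if a1 == 0 then
    (if a4 == 0 then (if a2 == 0 then e4 k else e1 k)
     else (if a2 == 0 then e3 k else pt4 0 a2 a3 (a2 ^+ 2 / a4)))
  else if [&& a2 == 0, a3 == 0 & a4 == 0] then e2 k
  else pt4 (- a1) (if a3 == 0 then - a2 else a2) a3 a4.

Lemma oppK0 (x : k) : - x = 0 -> x = 0.
Proof. by move/eqP; rewrite oppr_eq0 => /eqP. Qed.

Lemma classify (al : k) (hchar : (2%:R : k) != 0) (hal : al != 0)
  a1 a2 a3 a4 b1 b2 b3 b4 :
  inGamma al (pt4 a1 a2 a3 a4) (pt4 b1 b2 b3 b4) ->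
  peq (sigc a1 a2 a3 a4) (pt4 b1 b2 b3 b4) /\
  Gamma_listed al (pt4 a1 a2 a3 a4) (pt4 b1 b2 b3 b4).
Proof.
case/inGammaE => pa pb R1 R2 [R3 R4 R5 R6].
case: (eqVneq a1 0) => [a10|a1n].
  subst a1. case: (eqVneq b1 0) => [b10|b1n].
  subst b1. s0 R3.
  case: (eqVneq a4 0) => [a40|a4n].
    subst a4. s0 R5; s0 R6. rewrite R5 in R3; s0 R3.
    have h33 := mulK0 hal R3. rewrite h33 in R6.
    case: (eqVneq a2 0) => [a20|a2n].
      subst a2. move: pa; rewrite eqxx /= andbT => a3n. s0 R2.
      have b20 := mulK0 a3n R2. have b30 := mulK0 a3n h33. subst b2 b3.
      move: pb; rewrite eqxx /= => b4n.
      split.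
        rewrite /sigc eqxx /=; unfold e4; apply/peq_pt4; exists b4; split; [nz|F..].
      unfold Gamma_listed; apply: Or41; apply: Or43; split; unfold e3, e4; apply/peq_pt4.
        exists a3^-1; split; [nz|F..].
      exists b4^-1; split; [nz|F..].
    have b20 := mulK0 a2n R5. have b40 := mulK0 a2n R6. subst b2 b4. s0 R2.
    have b30 := mulK0 a2n (oppK0 R2). subst b3. by rewrite eqxx in pb.
  case: (eqVneq b4 0) => [b40|b4n].
    subst b4. s0 R5; s0 R6. rewrite R5 in R3; s0 R3.
    have h33 := mulK0 hal R3. rewrite h33 in R6.
    have b20 := mulK0 a4n R6. subst b2.
    move: pb; rewrite eqxx /= andbT => b3n.
    have a30 := mulK0r b3n h33. subst a3. s0 R2.
    have a20 := mulK0r b3n (oppK0 R2). subst a2.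
    split.
      rewrite /sigc eqxx (negbTE a4n) /=; unfold e3; apply/peq_pt4; exists b3; split; [nz|F..].
    unfold Gamma_listed; apply: Or41; apply: Or44; split; unfold e3, e4; apply/peq_pt4.
      exists a4^-1; split; [nz|F..].
    exists b3^-1; split; [nz|F..].
  have a2n : a2 != 0.
    apply/eqP => a20; subst a2; s0 R5; move/oppK0/eqP: R5.
    by rewrite mulf_eq0 (negbTE a4n) (negbTE b4n).
  have b2n : b2 != 0.
    apply/eqP => b20; subst b2; s0 R5; move/oppK0/eqP: R5.
    by rewrite mulf_eq0 (negbTE a4n) (negbTE b4n).
  have eb4 : b4 = a2 * b2 / a4 by apply: (from1 (- a4^-1) R5); F.
  subst b4.
  have eb3 : b3 = a3 * b2 / a2 by apply: (from1 (- a2^-1) R2); F.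
  subst b3.
  have h3 : al * a3 ^+ 2 = - 2 * a2 ^+ 2 by apply: (from1 (a2 / b2) R3); F.
  have h6 : a3 ^+ 2 * a4 = a2 * (a4 ^+ 2 + a2 ^+ 2)
    by apply: (from1 (- (a2 * a4) / b2) R6); F.
  split.
    rewrite /sigc eqxx (negbTE a4n) (negbTE a2n) /=; apply/peq_pt4.
    exists (b2 / a2); split; [nz|F..].
  unfold Gamma_listed; apply: Or44; exists 0, 0; right.
  exists (a2 / a4), (a3 / a4); split.
  - apply: (from2 ((a2 * a4)^-1) (- al / (a2 * a4 ^+ 2)) h3 h6); F.
  - apply: (from1 ((a4 ^+ 2)^-1) h3); F.
  - apply/peq_pt4; exists a4^-1; split; [nz|F..].
  - apply/peq_pt4; exists (a2 / (a4 * b2)); split; [nz|F..].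
  s0 R1; s0 R4.
  have a30 := mulK0r b1n R1. have a40 := mulK0r b1n R4. subst a3 a4.
  s0 R3; s0 R2; s0 R6; s0 R5.
  move: pa; rewrite eqxx /= andbT => a2n.
  have := mulK0 hchar R3 => /(mulK0 a2n) b20. subst b2.
  s0 R2; s0 R6. have b30 := mulK0 a2n (oppK0 R2). have b40 := mulK0 a2n R6. subst b3 b4.
  split.
    rewrite /sigc eqxx (negbTE a2n) /e1; apply/peq_pt4; exists b1; split => //; ring.
  unfold Gamma_listed; apply: Or41; apply: Or42; split; unfold e1, e2; apply/peq_pt4.
    exists a2^-1; split; [nz|F..].
  exists b1^-1; split; [nz|F..].
case: (eqVneq b1 0) => [b10|b1n].
  subst b1. s0 R1; s0 R4.
  have b30 := mulK0 a1n R1. have b40 := mulK0 a1n R4. subst b3 b4.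
  s0 R3; s0 R2; s0 R6.
  move: pb; rewrite eqxx /= andbT => b2n.
  have a20 := mulK0r b2n (mulK0 hchar R3). subst a2. s0 R2; s0 R6.
  have a30 := mulK0r b2n R2. have a40 := mulK0r b2n R6. subst a3 a4.
  split.
    rewrite /sigc (negbTE a1n) eqxx /=; unfold e2; apply/peq_pt4; exists b2; split; [nz|F..].
  unfold Gamma_listed; apply: Or41; apply: Or41; split; unfold e1, e2; apply/peq_pt4.
    exists a1^-1; split; [nz|F..].
  exists b2^-1; split; [nz|F..].
have eb3 : b3 = - a3 * b1 / a1 by apply: (from1 (a1^-1) R1); F.
have eb4 : b4 = - a4 * b1 / a1 by apply: (from1 (a1^-1) R4); F.
subst b3 b4.
case: (eqVneq a3 0) => [a30|a3n].
  subst a3.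
  have h : a1 ^+ 2 = - 2 * a4 ^+ 2
    by apply: (from2 (- a1 / b1) (2 * a1 / b1) R3 R5); F.
  have a4n : a4 != 0.
    apply/eqP => a40; move: h; rewrite a40 expr0n /= mulr0 => /eqP.
    by rewrite expf_eq0 /= (negbTE a1n).
  have eb2 : b2 = a2 * b1 / a1 by apply: (from1 (a4^-1) R6); F.
  subst b2.
  have h5 : a2 ^+ 2 = - a4 ^+ 2 by apply: (from1 (a1 / b1) R5); F.
  split.
    rewrite /sigc (negbTE a1n) (negbTE a4n) eqxx /= !andbF /=; apply/peq_pt4.
    exists (- b1 / a1); split; [nz|F..].
  unfold Gamma_listed; apply: Or44; exists (a1 / a4), (a2 / a4); left; split.
  - apply: (from1 ((a4 ^+ 2)^-1) h); F.
  - apply: (from1 ((a4 ^+ 2)^-1) h5); F.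
  - apply/peq_pt4; exists a4^-1; split; [nz|F..].
  - apply/peq_pt4; exists (- a1 / (b1 * a4)); split; [nz|F..].
have eb2 : b2 = - a2 * b1 / a1 by apply: (from1 (a3^-1) R2); F.
subst b2.
have h5 : a2 ^+ 2 = a4 ^+ 2 by apply: (from1 (- a1 / b1) R5); F.
have h6 : a3 ^+ 2 = 2 * a2 * a4 by apply: (from1 (a1 / b1) R6); F.
have h3 : a1 ^+ 2 = - (2 * a2 ^+ 2 + al * a3 ^+ 2) by apply: (from1 (- a1 / b1) R3); F.
move/eqP: h5; rewrite eqf_sqr => /orP [/eqP e|/eqP e]; subst a2.
  have a4n : a4 != 0.
    apply/eqP => a40; move: h6; rewrite a40 mulr0 => /eqP.
    by rewrite expf_eq0 /= (negbTE a3n).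
  split.
    rewrite /sigc (negbTE a1n) (negbTE a3n) /= andbF /=; apply/peq_pt4.
    exists (- b1 / a1); split; [nz|F..].
  unfold Gamma_listed; apply: Or42.
  exists (a1 / a4), (a3 / a4); split.
  - apply: (from2 ((a4 ^+ 2)^-1) (- al / a4 ^+ 2) h3 h6); F.
  - apply: (from1 ((a4 ^+ 2)^-1) h6); F.
  - apply/peq_pt4; exists a4^-1; split; [nz|F..].
  - apply/peq_pt4; exists (- a1 / (b1 * a4)); split; [nz|F..].
have a4n : a4 != 0.
  apply/eqP => a40; move: h6; rewrite a40 mulr0 => /eqP.
  by rewrite expf_eq0 /= (negbTE a3n).
split.
  rewrite /sigc (negbTE a1n) (negbTE a3n) /= andbF /=; apply/peq_pt4.
  exists (- b1 / a1); split; [nz|F..].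
unfold Gamma_listed; apply: Or43.
exists (a1 / a4), (a3 / a4); split.
- apply: (from2 ((a4 ^+ 2)^-1) (- al / a4 ^+ 2) h3 h6); F.
- apply: (from1 ((a4 ^+ 2)^-1) h6); F.
- apply/peq_pt4; exists a4^-1; split; [nz|F..].
- apply/peq_pt4; exists (- a1 / (b1 * a4)); split; [nz|F..].
Qed.
End Cls.


Section Main.
Variable k : fieldType.
Implicit Types (p q : 'rV[k]_4).

Lemma peq_refl p : peq p p.
Proof. by exists 1; rewrite oner_eq0 scale1r. Qed.

Lemma peq_sym p q : peq p q -> peq q p.
Proof.
case=> x [x0 ->]; exists x^-1; split; first by rewrite invr_eq0.
by rewrite scalerA mulVf // scale1r.
Qed.

Lemma peq_trans p q r : peq p q -> peq q r -> peq p r.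
Proof.
case=> x [x0 ->] [y [y0 ->]]; exists (y * x); split; first by rewrite mulf_neq0.
by rewrite scalerA.
Qed.

Lemma inGamma_sym al p q : inGamma al p q -> inGamma al q p.
Proof.
have [a1 [a2 [a3 [a4 ->]]]] := pt4_surj p.
have [b1 [b2 [b3 [b4 ->]]]] := pt4_surj q.
case/inGammaE => pa pb R1 R2 [R3 R4 R5 R6].
apply/inGammaE; split => //; first by apply: (from1 1 R1); ring.
  by apply: (from1 (-1) R2); ring.
split.
- by apply: (from1 1 R3); ring.
- by apply: (from1 1 R4); ring.
- by apply: (from1 1 R5); ring.
- by apply: (from1 1 R6); ring.
Qed.

Lemma inGamma_scale al p p' q : inGamma al p q -> peq p p' -> inGamma al p' q.
Proof.
have [a1 [a2 [a3 [a4 ->]]]] := pt4_surj p.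
have [b1 [b2 [b3 [b4 ->]]]] := pt4_surj q.
case/inGammaE => pa pb R1 R2 [R3 R4 R5 R6] [x [x0 ->]].
rewrite scale_pt4; apply/inGammaE; split => //.
- by rewrite !mulf_eq0 (negbTE x0).
- by apply: (from1 x R1); ring.
- by apply: (from1 x R2); ring.
split.
- by apply: (from1 x R3); ring.
- by apply: (from1 x R4); ring.
- by apply: (from1 x R5); ring.
- by apply: (from1 x R6); ring.
Qed.

Lemma inGamma_peq al p q p' q' :
  inGamma al p q -> peq p p' -> peq q q' -> inGamma al p' q'.
Proof.
move=> G pp qq; apply: inGamma_sym; apply: (inGamma_scale _ qq).
exact: inGamma_sym (inGamma_scale G pp).
Qed.

Definition sig p := sigc (co p 0) (co p 1) (co p 2) (co p 3).

Lemma classify2 al (hchar : (2%:R : k) != 0) (hal : al != 0) p q :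
  inGamma al p q -> peq (sig p) q /\ Gamma_listed al p q.
Proof.
have [a1 [a2 [a3 [a4 ->]]]] := pt4_surj p.
have [b1 [b2 [b3 [b4 ->]]]] := pt4_surj q.
rewrite /sig !co_pt4_0 !co_pt4_1 !co_pt4_2 !co_pt4_3.
exact: classify.
Qed.

Lemma Gamma_uniq al (hchar : (2%:R : k) != 0) (hal : al != 0) p q q' :
  inGamma al p q -> inGamma al p q' -> peq q q'.
Proof.
move=> /(classify2 hchar hal) [h _] /(classify2 hchar hal) [h' _].
exact: peq_trans (peq_sym h) h'.
Qed.

Lemma gam_e12 al : inGamma al (e1 k) (e2 k).
Proof. unfold e1, e2; apply/inGammaE; split; [by rewrite oner_eq0 ?andbF ?andFb|by rewrite oner_eq0 ?andbF ?andFb|ring|ring|split; ring]. Qed.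
Lemma gam_e21 al : inGamma al (e2 k) (e1 k).
Proof. unfold e1, e2; apply/inGammaE; split; [by rewrite oner_eq0 ?andbF ?andFb|by rewrite oner_eq0 ?andbF ?andFb|ring|ring|split; ring]. Qed.
Lemma gam_e34 al : inGamma al (e3 k) (e4 k).
Proof. unfold e3, e4; apply/inGammaE; split; [by rewrite oner_eq0 ?andbF ?andFb|by rewrite oner_eq0 ?andbF ?andFb|ring|ring|split; ring]. Qed.
Lemma gam_e43 al : inGamma al (e4 k) (e3 k).
Proof. unfold e3, e4; apply/inGammaE; split; [by rewrite oner_eq0 ?andbF ?andFb|by rewrite oner_eq0 ?andbF ?andFb|ring|ring|split; ring]. Qed.

Lemma gam_i (al l1 l3 : k) : l1 ^+ 2 = - 2 * (1 + al) -> l3 ^+ 2 = 2 ->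
  inGamma al (pt4 l1 1 l3 1) (pt4 (- l1) 1 l3 1).
Proof.
move=> h1 h3; apply/inGammaE; rewrite oner_eq0 !andbF; split => //; try ring.
split; try ring.
- by apply: (from2 1 al h1 h3); ring.
- by apply: (from1 (-1) h3); ring.
Qed.

Lemma gam_ii (al l1 l3 : k) : l1 ^+ 2 = - 2 * (1 - al) -> l3 ^+ 2 = - 2 ->
  inGamma al (pt4 l1 (-1) l3 1) (pt4 (- l1) (-1) l3 1).
Proof.
move=> h1 h3; apply/inGammaE; rewrite oner_eq0 !andbF; split => //; try ring.
split; try ring.
- by apply: (from2 1 al h1 h3); ring.
- by apply: (from1 (-1) h3); ring.
Qed.

Lemma gam_iii (al l1 l2 : k) : l1 ^+ 2 = - 2 -> l2 ^+ 2 = - 1 ->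
  inGamma al (pt4 l1 l2 0 1) (pt4 (- l1) (- l2) 0 1).
Proof.
move=> h1 h2; apply/inGammaE; rewrite oner_eq0 !andbF; split => //; try ring.
split; try ring.
- by apply: (from2 1 (-2) h1 h2); ring.
- by apply: (from1 (-1) h2); ring.
Qed.

Lemma gam_iv (al : k) (hal : al != 0) (l2 l3 : k) : al * l2 ^+ 2 + 2 * l2 + al = 0 ->
  al * l3 ^+ 2 = - 2 * l2 ^+ 2 ->
  inGamma al (pt4 0 l2 l3 1) (pt4 0 l2 l3 (l2 ^+ 2)).
Proof.
move=> hq h3.
have l2n : l2 != 0.
  by apply/eqP => l20; move: hq; rewrite l20 expr0n /= !mulr0 !add0r => /eqP; rewrite (negbTE hal).
apply/inGammaE; rewrite oner_eq0 expf_eq0 (negbTE l2n) !andbF; split => //; try ring.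
split; try ring.
- by apply: (from1 1 h3); ring.
- by apply: (from2 (l2 / al) (- al^-1) hq h3); F.
Qed.

Lemma listed_gamma (al : k) (hal : al != 0) p q : Gamma_listed al p q -> inGamma al p q.
Proof.
case.
- case=> [[hp hq]|[hp hq]|[hp hq]|[hp hq]].
  + exact: inGamma_peq (gam_e12 al) (peq_sym hp) (peq_sym hq).
  + exact: inGamma_peq (gam_e21 al) (peq_sym hp) (peq_sym hq).
  + exact: inGamma_peq (gam_e34 al) (peq_sym hp) (peq_sym hq).
  + exact: inGamma_peq (gam_e43 al) (peq_sym hp) (peq_sym hq).
- case=> l1 [l3 [h1 h3 hp hq]].
  exact: inGamma_peq (gam_i h1 h3) (peq_sym hp) (peq_sym hq).
- case=> l1 [l3 [h1 h3 hp hq]].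
  exact: inGamma_peq (gam_ii h1 h3) (peq_sym hp) (peq_sym hq).
- case=> l1 [l2 [[h1 h2 hp hq]|[l2' [l3 [h1 h3 hp hq]]]]].
  + exact: inGamma_peq (gam_iii al h1 h2) (peq_sym hp) (peq_sym hq).
  + exact: inGamma_peq (gam_iv hal h1 h3) (peq_sym hp) (peq_sym hq).
Qed.

End Main.


Section Z.
Variable k : fieldType.

Lemma Zfwd (al : k) (hchar : (2%:R : k) != 0) (hal : al != 0) (i : 'I_5) p q :
  inGamma al p q -> inZ al i p -> inZ al i q.
Proof.
move=> G; unfold inZ; case: i => [[|[|[|[|[|m]]]]] Hi]; cbn [nat_of_ord]; last by exfalso; move: Hi; rewrite !ltnS ltn0.

- case=> hp.
  + apply: Or42; apply: (Gamma_uniq hchar hal G).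
    exact: inGamma_peq (gam_e12 al) (peq_sym hp) (peq_refl _).
  + apply: Or41; apply: (Gamma_uniq hchar hal G).
    exact: inGamma_peq (gam_e21 al) (peq_sym hp) (peq_refl _).
  + apply: Or44; apply: (Gamma_uniq hchar hal G).
    exact: inGamma_peq (gam_e34 al) (peq_sym hp) (peq_refl _).
  + apply: Or43; apply: (Gamma_uniq hchar hal G).
    exact: inGamma_peq (gam_e43 al) (peq_sym hp) (peq_refl _).
- case=> l1 [l3 [h1 h3 hp]]; exists (- l1), l3; split; rewrite ?sqrrN //.
  apply: (Gamma_uniq hchar hal G).
  exact: inGamma_peq (gam_i h1 h3) (peq_sym hp) (peq_refl _).
- case=> l1 [l3 [h1 h3 hp]]; exists (- l1), l3; split; rewrite ?sqrrN //.
  apply: (Gamma_uniq hchar hal G).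
  exact: inGamma_peq (gam_ii h1 h3) (peq_sym hp) (peq_refl _).
- case=> l1 [l2 [h1 h2 hp]]; exists (- l1), (- l2); split; rewrite ?sqrrN //.
  apply: (Gamma_uniq hchar hal G).
  exact: inGamma_peq (gam_iii al h1 h2) (peq_sym hp) (peq_refl _).
- case=> l2 [l3 [hq h3 hp]].
  have l2n : l2 != 0.
    by apply/eqP => l20; move: hq; rewrite l20 expr0n /= !mulr0 !add0r => /eqP; rewrite (negbTE hal).
  exists l2^-1, (l3 / l2 ^+ 2); split.
  + by apply: (from1 ((l2 ^+ 2)^-1) hq); F.
  + by apply: (from1 ((l2 ^+ 4)^-1) h3); F.
  + apply: peq_trans (Gamma_uniq hchar hal G
       (inGamma_peq (gam_iv hal hq h3) (peq_sym hp) (peq_refl _))) _.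
    apply/peq_pt4; exists (l2 ^+ 2)^-1; split; [nz|F..].
Qed.

Lemma peq1 (a b c a' b' c' : k) :
  peq (pt4 a b c 1) (pt4 a' b' c' 1) -> [/\ a = a', b = b' & c = c'].
Proof.
case/peq_pt4 => x [x0 -> -> ->]; rewrite mulr1 => x1.
by rewrite -x1 !mul1r.
Qed.

Lemma neq_opp (x : k) : (2%:R : k) != 0 -> x != 0 -> x != - x.
Proof.
move=> h2 x0; apply/eqP => e.
have : 2%:R * x = 0 by rewrite mulr_natl mulr2n {1}e addNr.
by move/eqP; rewrite mulf_eq0 (negbTE h2) (negbTE x0).
Qed.

Lemma sq_nz (x a : k) : x ^+ 2 = a -> a != 0 -> x != 0.
Proof. by move=> h an; apply/eqP => x0; move: an; rewrite -h x0 expr2 mul0r eqxx. Qed.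

Lemma sq2 (x y : k) : x ^+ 2 = y ^+ 2 -> x = y \/ x = - y.
Proof. by move/eqP; rewrite eqf_sqr => /orP [/eqP|/eqP]; [left|right]. Qed.

Lemma quad2 (al r y : k) : al != 0 -> r != 0 ->
  al * r ^+ 2 + 2 * r + al = 0 -> al * y ^+ 2 + 2 * y + al = 0 -> y = r \/ y = r^-1.
Proof.
move=> hal r0 hr hy.
have E : (y - r) * (al * (y + r) + 2) = 0 by apply: (from2 1 (-1) hy hr); ring.
move/eqP: E; rewrite mulf_eq0 => /orP [/eqP|/eqP E].
  by move/eqP; rewrite subr_eq0 => /eqP; left.
by right; apply: (from2 al^-1 (- (al * r)^-1) E hr); F.
Qed.

End Z.

Section Closed.
Variable k : closedFieldType.

Lemma sqrt_ex (a : k) : exists x, x ^+ 2 = a.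
Proof.
have [x hx] := @solve_monicpoly k 2 (fun i => if i == 0%N then a else 0) isT.
exists x; rewrite hx !big_ord_recl big_ord0 /=; ring.
Qed.

Lemma quad_ex (al : k) : al != 0 -> exists r, al * r ^+ 2 + 2 * r + al = 0.
Proof.
move=> hal.
have [x hx] := @solve_monicpoly k 2 (fun i => if i == 0%N then -1 else - 2 / al) isT.
exists x; move: hx; rewrite !big_ord_recl big_ord0 /= => hx.
by apply: (from1 al hx); F.
Qed.

End Closed.

Ltac solveN := match goal with
  | H : ?x = ?y, N : is_true (?x != ?y) |- _ => exact: (elimN eqP N H)
  | H : ?x = ?y, N : is_true (?y != ?x) |- _ => exact: (elimN eqP N (esym H))
  end.
Ltac solveX := match goal with
  | X : is_true (?x != 0), H : 0 = ?x * 1 |- _ => by rewrite mulr1 in H; rewrite -H eqxx in X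
  | H : 1 = _ * 0 |- _ => by move/eqP: H; rewrite mulr0 oner_eq0
  end.
Ltac dist := first [ by move/peq1 => [? ? ?]; solveN
                   | by move/peq_pt4 => [? [? ? ? ? ?]]; solveX ].

Unset Implicit Arguments. Set Strict Implicit.

Theorem corollary2p3 (k : closedFieldType) (al : k)
    (hchar : (2%:R : k) != 0) (hal : al * (1 - al ^+ 2) != 0) :
  [/\ (* Gamma is the graph of a map sigma on p (well-defined on P^3),
         with sigma(p) contained in p *)
      [/\ (forall p q q', inGamma al p q -> inGamma al p q' -> peq q q'),
          (forall p p' q, inGamma al p q -> peq p p' -> inGamma al p' q) &
          (forall p q, inGamma al p q -> exists r, inGamma al q r)],
      (* the points of Gamma are exactly those listed in (o)-(iv) *)
      (forall p q, inGamma al p q <-> Gamma_listed al p q),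
      (* sigma(Z_i) = Z_i *)
      (forall (i : 'I_5) p q, inGamma al p q -> (inZ al i p <-> inZ al i q)) &
      (* sigma has exactly ten orbits of order two *)
      exists O : 'I_10 -> 'rV[k]_4 * 'rV[k]_4,
        [/\ forall j, [/\ inGamma al (O j).1 (O j).2, inGamma al (O j).2 (O j).1
                        & ~ peq (O j).1 (O j).2],
            forall j j', j != j' -> ~ peq (O j).1 (O j').1 /\ ~ peq (O j).1 (O j').2
          & forall p q, inGamma al p q -> inGamma al q p -> ~ peq p q ->
              exists j, peq p (O j).1 \/ peq p (O j).2]].
Proof.
have hal0 : al != 0 by move: hal; rewrite mulf_eq0 negb_or => /andP [].
have hal1 : 1 - al ^+ 2 != 0 by move: hal; rewrite mulf_eq0 negb_or => /andP [].
have [hm hpl] : 1 - al != 0 /\ 1 + al != 0.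
  have : (1 - al) * (1 + al) != 0.
    by rewrite (_ : (1 - al) * (1 + al) = 1 - al ^+ 2) //; ring.
  by rewrite mulf_eq0 negb_or => /andP [].
split.
- split.
  + move=> p q q'; exact: (Gamma_uniq hchar hal0).
  + move=> p p' q G pp; exact: (inGamma_scale G pp).
  + move=> p q G; exists p; exact: inGamma_sym.
- move=> p q; split; [by case/(classify2 hchar hal0) | exact: listed_gamma].
- move=> i p q G; split; [exact: (Zfwd hchar hal0 G) | exact: (Zfwd hchar hal0 (inGamma_sym G))].
have [s hs] := sqrt_ex (-2 * (1 + al)).
have [t ht] := sqrt_ex (2%:R : k).
have [u hu] := sqrt_ex (-2 * (1 - al)).
have [v hv] := sqrt_ex (-2 : k).
have [w hw] := sqrt_ex (-1 : k).
have [r hr] := quad_ex hal0.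
have r0 : r != 0.
  by apply/eqP => r0; move: hr; rewrite r0 expr0n /= !mulr0 !add0r => /eqP; rewrite (negbTE hal0).
have [z hz0] := sqrt_ex (-2 * r ^+ 2 / al).
have hz : al * z ^+ 2 = - 2 * r ^+ 2 by rewrite hz0; F.
have s0 : s != 0 by apply: (sq_nz hs); nz.
have t0 : t != 0 by apply: (sq_nz ht); nz.
have u0 : u != 0 by apply: (sq_nz hu); nz.
have v0 : v != 0 by apply: (sq_nz hv); nz.
have w0 : w != 0 by apply: (sq_nz hw); rewrite oppr_eq0 oner_eq0.
have z0 : z != 0 by apply: (sq_nz hz0); nz.
have rr : r != r^-1.
  apply/eqP => e.
  have r2 : r ^+ 2 = 1 by rewrite expr2 {2}e mulfV.
  have E : 2%:R * (r + al) = 0 by apply: (from2 1 (- al) hr r2); ring.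
  move/eqP: E; rewrite mulf_eq0 (negbTE hchar) /= addr_eq0 => /eqP ra.
  by move: hal1; rewrite -r2 ra sqrrN subrr eqxx.
have ss := neq_opp hchar s0. have tt := neq_opp hchar t0.
have uu := neq_opp hchar u0. have vv := neq_opp hchar v0.
have ww := neq_opp hchar w0. have zz := neq_opp hchar z0.
have zr0 : z / r ^+ 2 != 0 by nz.
have zrzr := neq_opp hchar zr0.
have one1 : (1 : k) != -1 by exact: (neq_opp hchar (oner_neq0 _)).
have s0' : - s != 0 by rewrite oppr_eq0. have t0' : - t != 0 by rewrite oppr_eq0.
have u0' : - u != 0 by rewrite oppr_eq0. have v0' : - v != 0 by rewrite oppr_eq0.
have w0' : - w != 0 by rewrite oppr_eq0. have o1 : (1 : k) != 0 := oner_neq0 _.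
have o1' : (- 1 : k) != 0 by rewrite oppr_eq0.
have ri0 : r^-1 != 0 by rewrite invr_eq0.
pose On (j : nat) : 'rV[k]_4 * 'rV[k]_4 := match j with
  | 0 => (pt4 1 0 0 0, pt4 0 1 0 0)
  | 1 => (pt4 0 0 1 0, pt4 0 0 0 1)
  | 2 => (pt4 s 1 t 1, pt4 (- s) 1 t 1)
  | 3 => (pt4 s 1 (- t) 1, pt4 (- s) 1 (- t) 1)
  | 4 => (pt4 u (-1) v 1, pt4 (- u) (-1) v 1)
  | 5 => (pt4 u (-1) (- v) 1, pt4 (- u) (-1) (- v) 1)
  | 6 => (pt4 v w 0 1, pt4 (- v) (- w) 0 1)
  | 7 => (pt4 v (- w) 0 1, pt4 (- v) w 0 1)
  | 8 => (pt4 0 r z 1, pt4 0 r^-1 (z / r ^+ 2) 1)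
  | _ => (pt4 0 r (- z) 1, pt4 0 r^-1 (- (z / r ^+ 2)) 1)
  end%N.
exists (fun j => On (val j)); split.
- move=> [j _] /=.
  have ht' : (- t) ^+ 2 = 2%:R by rewrite sqrrN.
  have hv' : (- v) ^+ 2 = -2 by rewrite sqrrN.
  have hw' : (- w) ^+ 2 = -1 by rewrite sqrrN.
  have hz' : al * (- z) ^+ 2 = - 2 * r ^+ 2 by rewrite sqrrN.
  case: j => [|[|[|[|[|[|[|[|[|j]]]]]]]]]; rewrite /On /=.
  + have G := gam_e12 al; split; [exact: G | exact: (inGamma_sym G) | dist].
  + have G := gam_e34 al; split; [exact: G | exact: (inGamma_sym G) | dist].
  + have G := gam_i hs ht; split; [exact: G | exact: (inGamma_sym G) | dist].
  + have G := gam_i hs ht'; split; [exact: G | exact: (inGamma_sym G) | dist].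
  + have G := gam_ii hu hv; split; [exact: G | exact: (inGamma_sym G) | dist].
  + have G := gam_ii hu hv'; split; [exact: G | exact: (inGamma_sym G) | dist].
  + have G := gam_iii al hv hw; split; [exact: G | exact: (inGamma_sym G) | dist].
  + have G := gam_iii al hv hw'; rewrite opprK in G.
    split; [exact: G | exact: (inGamma_sym G) | dist].
  + have G : inGamma al (pt4 0 r z 1) (pt4 0 r^-1 (z / r ^+ 2) 1).
      apply: (inGamma_peq (gam_iv hal0 hr hz) (peq_refl _)).
      apply/peq_pt4; exists (r ^+ 2)^-1; split; [nz|F..].
    split; [exact: G | exact: (inGamma_sym G) | dist].
  + have G : inGamma al (pt4 0 r (- z) 1) (pt4 0 r^-1 (- (z / r ^+ 2)) 1).
      apply: (inGamma_peq (gam_iv hal0 hr hz') (peq_refl _)).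
      apply/peq_pt4; exists (r ^+ 2)^-1; split; [nz|F..].
    split; [exact: G | exact: (inGamma_sym G) | dist].
- move=> [j Hj] [j' Hj'] ne.
  have {ne} : j != j' := ne.
  move: Hj Hj'; rewrite /On /=.
  case: j => [|[|[|[|[|[|[|[|[|[|j]]]]]]]]]] //;
  case: j' => [|[|[|[|[|[|[|[|[|[|j']]]]]]]]]] //= _ _ _; split; dist.
- move=> p q G _ _.
  have [_ L] := classify2 hchar hal0 G.
  case: L.
  + case=> [[hp _]|[hp _]|[hp _]|[hp _]].
    * by exists (@Ordinal 10 0 isT); left.
    * by exists (@Ordinal 10 0 isT); right.
    * by exists (@Ordinal 10 1 isT); left.
    * by exists (@Ordinal 10 1 isT); right.
  + case=> l1 [l3 [h1 h3 hp _]].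
    case: (sq2 (etrans h1 (esym hs))) => e1; case: (sq2 (etrans h3 (esym ht))) => e3;
      subst l1 l3.
    * by exists (@Ordinal 10 2 isT); left.
    * by exists (@Ordinal 10 3 isT); left.
    * by exists (@Ordinal 10 2 isT); right.
    * by exists (@Ordinal 10 3 isT); right.
  + case=> l1 [l3 [h1 h3 hp _]].
    case: (sq2 (etrans h1 (esym hu))) => e1; case: (sq2 (etrans h3 (esym hv))) => e3;
      subst l1 l3.
    * by exists (@Ordinal 10 4 isT); left.
    * by exists (@Ordinal 10 5 isT); left.
    * by exists (@Ordinal 10 4 isT); right.
    * by exists (@Ordinal 10 5 isT); right.
  + case=> l1 [l2 [[h1 h2 hp _]|[l2' [l3 [hq h3 hp _]]]]].
    * case: (sq2 (etrans h1 (esym hv))) => e1; case: (sq2 (etrans h2 (esym hw))) => e2;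
        subst l1 l2.
      - by exists (@Ordinal 10 6 isT); left.
      - by exists (@Ordinal 10 7 isT); left.
      - by exists (@Ordinal 10 7 isT); right.
      - by exists (@Ordinal 10 6 isT); right.
    * case: (quad2 hal0 r0 hr hq) => e; subst l2'.
      - have e3 : l3 ^+ 2 = z ^+ 2 by apply: (mulfI hal0); rewrite h3 hz.
        case: (sq2 e3) => e; subst l3.
          by exists (@Ordinal 10 8 isT); left.
        by exists (@Ordinal 10 9 isT); left.
      - have e3 : l3 ^+ 2 = (z / r ^+ 2) ^+ 2.
          apply: (mulfI hal0); rewrite h3; apply: (from1 (- (r ^+ 4)^-1) hz); F.
        case: (sq2 e3) => e; subst l3.
          by exists (@Ordinal 10 8 isT); right.
        by exists (@Ordinal 10 9 isT); right.
Qed.
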